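(* The triple $(\mathbb{G}, \varepsilon, (\cdot)^* )$ is a comonad in Kleisli form on the category of $\sigma$-structures, i.e. the following equations hold (for all $\sigma$-structures $\mathcal{A}$ and homomorphisms $f : \mathbb{G}\mathcal{A} \to \mathcal{B}$, $g : \mathbb{G}\mathcal{B} \to \mathcal{C}$): \[ \varepsilon_{\mathcal{A}}^* = \mathsf{id}_{\mathbb{G} \mathcal{A}}, \qquad \varepsilon \circ f^* = f, \qquad (g \circ f^* )^* = g^* \circ f^* . \]
   Context: Fix a relational vocabulary $\sigma$ and a notion of guarding $\mathfrak{g}$ (atom, loose, or clique guards). A subset $X$ of a $\sigma$-structure $\mathcal{A}$ is $\mathfrak{g}$-guarded if it is contained in the support of a tuple $\vec{a}$ with $\mathcal{A} \models G(\vec{a})$ for some $\mathfrak{g}$-guard $G$. A play is a non-empty list $p = [U_1,\ldots,U_n]$ of $\mathfrak{g}$-guarded sets of $\mathcal{A}$, with last element $\lambda(p) = U_n$; plays are ordered by the prefix order $\sqsubseteq$. A focussed play is a pair $\langle p, a\rangle$ with $a \in \lambda(p)$. Define $\langle p, a\rangle \sim \langle q, a'\rangle$ iff $a = a'$, the greatest common prefix $p \sqcap q$ is non-empty, and $a$ belongs to $\lambda(u)$ for every $u \in [p\sqcap q, p] \cup [p \sqcap q, q]$. Write $[p,a]$ for the $\sim$-equivalence class of $\langle p, a\rangle$. The structure $\mathbb{G}\mathcal{A}$ (written $\mathbb{G}^{\mathfrak{g}}\mathcal{A}$ when the guard type matters) has universe the set of these classes, and $R^{\mathbb{G}\mathcal{A}}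 = \{([p,a_1],\ldots,[p,a_r]) \mid R^{\mathcal{A}}(a_1,\ldots,a_r)\}$. The counit $\varepsilon_{\mathcal{A}} : \mathbb{G}\mathcal{A} \to \mathcal{A}$ is $\varepsilon_{\mathcal{A}}([p,a]) = a$. For a homomorphism $h : \mathbb{G}\mathcal{A} \to \mathcal{B}$, its coextension $h^* : \mathbb{G}\mathcal{A} \to \mathbb{G}\mathcal{B}$ is $h^*([[U_1,\ldots,U_n],a]) = [[V_1,\ldots,V_n], h([[U_1,\ldots,U_n],a])]$, where $V_j = \{ h([[U_1,\ldots,U_j], b]) \mid b \in U_j\}$ for $1 \le j \le n$. *)

(* Defs.v *)
From Stdlib Require Import ClassicalEpsilon.
From mathcomp Require Import all_boot.
Set Implicit Arguments. Unset Strict Implicit. Unset Printing Implicit Defensive.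

Record vocab := Vocab { sym :> Type; arity : sym -> nat }.

(** The universe is given as a predicate [dom] on a
    carrier type (an ordinary structure is the case [dom = fun _ => True]);
    relations only contain tuples of elements of the universe. *)
Record structure (s : vocab) := Structure {
  carrier :> Type;
  dom : carrier -> Prop;
  rel : forall r : sym s, ('I_(arity r) -> carrier) -> Prop;
  rel_dom : forall (r : sym s) (t : 'I_(arity r) -> carrier) (i : 'I_(arity r)), @rel r t -> dom (t i) }.

Arguments dom {s} A _ : rename.
Arguments rel {s} A r _ : rename.




Definition is_hom s (A B : structure s) (f : A -> B) : Prop :=
  (forall x, dom A x -> dom B (f x)) /\
  (forall (r : sym s) (t : 'I_(arity r) -> A), rel A r t -> rel B r (fun i => f (t i))).
Arguments is_hom {s} A B f.

Inductive guard_kind := AtomGuard | LooseGuard | CliqueGuard.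

Definition in_tuple (T : Type) n (t : 'I_n -> T) (x : T) : Prop := exists i, t i = x.

(** atom guards R(x) (R in sigma) or equality atoms x = y *)
Definition atom_guarded s (A : structure s) (X : A -> Prop) : Prop :=
  (exists (r : sym s) (t : 'I_(arity r) -> A), rel A r t /\ forall x, X x -> in_tuple t x)
  \/ (exists a, dom A a /\ forall x, X x -> x = a).

(** loose guards: a tuple (listed by Y) satisfying a conjunction of atoms over
    its own variables, each pair of variables occurring together in some atom
    (equality atoms allowed) *)
Definition loose_guarded s (A : structure s) (X : A -> Prop) : Prop :=
  exists Y : seq A,
    (forall y, List.In y Y -> dom A y) /\
    (forall x, X x -> List.In x Y) /\
    (forall y y', List.In y Y -> List.In y' Y ->
       y = y' \/ exists (r : sym s) (t : 'I_(arity r) -> A),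
                   rel A r t /\ in_tuple t y /\ in_tuple t y' /\
                   forall i, List.In (t i) Y).

(** clique guards: as loose guards, but the atoms may contain further
    (existentially quantified) elements *)
Definition clique_guarded s (A : structure s) (X : A -> Prop) : Prop :=
  exists Y : seq A,
    (forall y, List.In y Y -> dom A y) /\
    (forall x, X x -> List.In x Y) /\
    (forall y y', List.In y Y -> List.In y' Y ->
       y = y' \/ exists (r : sym s) (t : 'I_(arity r) -> A),
                   rel A r t /\ in_tuple t y /\ in_tuple t y').

Definition guarded (g : guard_kind) s (A : structure s) (X : A -> Prop) : Prop :=
  match g with
  | AtomGuard => atom_guarded X
  | LooseGuard => loose_guarded X
  | CliqueGuard => clique_guarded X
  end.
Arguments guarded g {s} A X.

Definition play_seq s (A : structure s) := seq (A -> Prop).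

Definition is_play g s (A : structure s) (p : play_seq A) : Prop :=
  p <> [::] /\ List.Forall (guarded g A) p.
Arguments is_play g {s} A p.

Definition lambda s (A : structure s) (p : play_seq A) : A -> Prop :=
  last (fun _ => False) p.

Definition prefix (T : Type) (r p : seq T) : Prop := exists u, p = r ++ u.

Definition is_gcp (T : Type) (r p q : seq T) : Prop :=
  prefix r p /\ prefix r q /\ (forall u, prefix u p -> prefix u q -> prefix u r).

Definition fplay s (A : structure s) := (play_seq A * A)%type.

Definition is_fplay g s (A : structure s) (x : fplay A) : Prop :=
  is_play g A x.1 /\ lambda x.1 x.2.
Arguments is_fplay g {s} A x.

Definition fsim s (A : structure s) (x y : fplay A) : Prop :=
  x.2 = y.2 /\
  exists r, is_gcp r x.1 y.1 /\ r <> [::] /\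
    forall u, prefix r u -> (prefix u x.1 \/ prefix u y.1) -> lambda u x.2.

Definition fclass g s (A : structure s) (x : fplay A) : fplay A -> Prop :=
  fun y => is_fplay g A y /\ fsim x y.

Definition Gcarrier g s (A : structure s) : Type :=
  {C : fplay A -> Prop | exists x, C = fclass g x}.

Definition gcls g s (A : structure s) (x : fplay A) : Gcarrier g A :=
  exist _ (fclass g x) (ex_intro _ x erefl).

Definition Gdom g s (A : structure s) (C : Gcarrier g A) : Prop :=
  exists x, is_fplay g A x /\ sval C = fclass g x.

Definition Grel g s (A : structure s) (r : sym s) (t : 'I_(arity r) -> Gcarrier g A) : Prop :=
  exists (p : play_seq A) (a : 'I_(arity r) -> A),
    is_play g A p /\ (forall i, lambda p (a i)) /\ rel A r a /\
    forall i, sval (t i) = fclass g (p, a i).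

Lemma Grel_dom g s (A : structure s) r t i : @Grel g s A r t -> Gdom (t i).
Proof.
move=> [p [a [Hp [Hl [_ Ht]]]]]; exists (p, a i); split; last exact: Ht.
by rewrite /is_fplay /=; split.
Qed.

Definition G g s (A : structure s) : structure s :=
  @Structure s (Gcarrier g A) (@Gdom g s A) (@Grel g s A) (@Grel_dom g s A).

(** a chosen representative of a class: a genuine focussed play
    representing it whenever there is one (i.e. whenever the class is an
    element of the universe of G A) *)
Definition rep g s (A : structure s) (C : G g A) : fplay A :=
  match excluded_middle_informative (Gdom C) with
  | left H => proj1_sig (constructive_indefinite_description _ H)
  | right _ => proj1_sig (constructive_indefinite_description _ (proj2_sig C))
  end.

Definition counit g s (A : structure s) : G g A -> A :=
  fun C => (rep C).2.

(** coextension: h*[[U_1..U_n],a] = [[V_1..V_n], h[[U_1..U_n],a]] with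
    V_j = { h [[U_1..U_j], b] | b in U_j } *)
Definition Vset g s (A B : structure s) (h : G g A -> B) (p : play_seq A) (j : nat) : B -> Prop :=
  fun y => exists b, lambda (take j p) b /\ y = h (gcls g (take j p, b)).

Definition Vplay g s (A B : structure s) (h : G g A -> B) (p : play_seq A) : play_seq B :=
  [seq Vset h p j | j <- iota 1 (size p)].

Definition coext g s (A B : structure s) (h : G g A -> B) : G g A -> G g B :=
  fun C => gcls g (Vplay h (rep C).1, h C).

(* Main.v *)
Require Import Defs.
From Stdlib Require Import ClassicalEpsilon FunctionalExtensionality PropExtensionality ProofIrrelevance Classical.
From mathcomp Require Import all_boot zify.
Set Implicit Arguments. Unset Strict Implicit. Unset Printing Implicit Defensive.

Section Basics.
Variable (g : guard_kind) (s : vocab).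

Lemma prefixE (T : Type) (a b : seq T) : Defs.prefix a b <-> take (size a) b = a.
Proof.
split; first by move=> [u ->]; rewrite take_size_cat.
move=> H; exists (drop (size a) b); by rewrite -{1}H cat_take_drop.
Qed.

Lemma prefix_size (T : Type) (a b : seq T) : Defs.prefix a b -> size a <= size b.
Proof. by move=> [u ->]; rewrite size_cat leq_addr. Qed.

Lemma prefix_nil (T : Type) (u : seq T) : Defs.prefix u [::] -> u = [::].
Proof. by case: u => // x u [v]. Qed.

Lemma prefix0 (T : Type) (u : seq T) : Defs.prefix [::] u.
Proof. by exists u. Qed.

Lemma prefix_refl (T : Type) (u : seq T) : Defs.prefix u u.
Proof. by exists [::]; rewrite cats0. Qed.

Lemma gcp_ex (T : Type) (p q : seq T) : exists r, is_gcp r p q.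
Proof.
elim: p q => [|x p IH] [|y q].
- exists [::]; split; [exact: prefix0|split; [exact: prefix0|]] => u /prefix_nil -> _; exact: prefix0.
- exists [::]; split; [exact: prefix0|split; [exact: prefix0|]] => u /prefix_nil -> _; exact: prefix0.
- exists [::]; split; [exact: prefix0|split; [exact: prefix0|]] => u _ /prefix_nil ->; exact: prefix0.
- case: (classic (x = y)) => [<-|Hxy].
  + have [r [[u1 Hu1] [[u2 Hu2] Hm]]] := IH q.
    exists (x :: r); split; [exists u1; by rewrite Hu1|split; [exists u2; by rewrite Hu2|]].
    move=> [|z u] ; first by move=> *; exact: prefix0.
    move=> [v1 /= [e1 H1]] [v2 /= [e2 H2]]; subst z.
    have [w Hw] : Defs.prefix u r by apply: Hm; [exists v1|exists v2].
    by exists w; rewrite Hw.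
  + exists [::]; split; [exact: prefix0|split; [exact: prefix0|]].
    move=> [|z u]; first by move=> *; exact: prefix0.
    by move=> [v1 /= [e1 _]] [v2 /= [e2 _]]; subst; case: Hxy.
Qed.

Definition fsim2 (A : structure s) (x y : fplay A) : Prop :=
  x.2 = y.2 /\ exists k, 0 < k /\ k <= size x.1 /\ k <= size y.1 /\ take k x.1 = take k y.1 /\
   (forall j, k <= j <= size x.1 -> lambda (take j x.1) x.2) /\
   (forall j, k <= j <= size y.1 -> lambda (take j y.1) x.2).

Lemma fsimE (A : structure s) (x y : fplay A) : fsim x y <-> fsim2 x y.
Proof.
case: x y => p a [q b]; rewrite /fsim /fsim2 /=; split.
- move=> [e [r [[Hrp [Hrq Hm]] [Hr Hl]]]]; subst b; split => //.
  exists (size r).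
  have Hp := prefix_size Hrp; have Hq := prefix_size Hrq.
  move: Hrp Hrq => /prefixE Hrp /prefixE Hrq.
  split; first by case: r Hr {Hp Hq Hrp Hrq Hm Hl}.
  do 3 (split => //); first by rewrite Hrp Hrq.
  split => j /andP [h1 h2]; apply: Hl.
  + by apply/prefixE; rewrite take_takel // Hrp.
  + by left; apply/prefixE; rewrite size_takel.
  + by apply/prefixE; rewrite take_takel // Hrq.
  + by right; apply/prefixE; rewrite size_takel.
- move=> [e [k [k0 [kp [kq [Ht [Hl1 Hl2]]]]]]]; subst b; split => //.
  have [r [Hrp [Hrq Hm]]] := gcp_ex p q.
  have Hk : k <= size r.
    have : Defs.prefix (take k p) r.
      apply: Hm; apply/prefixE; rewrite size_takel //; by rewrite ?Ht.
    by move/prefix_size; rewrite size_takel.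
  exists r; split; [by split|split; first by move=> Er; rewrite Er /= in Hk; lia].
  move=> u Hru [Hup|Huq].
  + have := prefix_size Hru; have := prefix_size Hup; move/prefixE: Hup => E h1 h2; rewrite -E.
    apply: Hl1; lia.
  + have := prefix_size Hru; have := prefix_size Huq; move/prefixE: Huq => E h1 h2; rewrite -E.
    apply: Hl2; lia.
Qed.

Lemma fsim2_sym (A : structure s) (x y : fplay A) : fsim2 x y -> fsim2 y x.
Proof.
move=> [e [k [k0 [kp [kq [Ht [Hl1 Hl2]]]]]]]; split => //.
exists k; do 4 (split => //); rewrite -e; by split.
Qed.

Lemma fsim2_trans (A : structure s) (x y z : fplay A) : fsim2 x y -> fsim2 y z -> fsim2 x z.
Proof.
case: x y z => p a [q b] [t c] /=.
move=> [/= e1 [k1 [k10 [k1p [k1q [Ht1 [Hl1 Hl2]]]]]]].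
move=> [/= e2 [k2 [k20 [k2q [k2t [Ht2 [Hm1 Hm2]]]]]]].
subst b c; split => //=.
case: (leqP k1 k2) => hk.
- exists k1; split => //; split => //; split; first lia.
  have E : take k1 q = take k1 t by rewrite -(take_takel _ hk) Ht2 take_takel.
  split; first by rewrite Ht1 E.
  split => // j /andP [h1 h2].
  case: (leqP k2 j) => hj; first by apply: Hm2; lia.
  have -> : take j t = take j q.
    by rewrite -(take_takel t (ltnW hj)) -Ht2 take_takel // ltnW.
  apply: Hl2; lia.
- exists k2; split => //; split; first lia; split => //.
  have E : take k2 p = take k2 q by rewrite -(take_takel _ (ltnW hk)) Ht1 take_takel // ltnW.
  split; first by rewrite E.
  split => // j /andP [h1 h2].
  case: (leqP k1 j) => hj; first by apply: Hl1; lia.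
  have -> : take j p = take j q.
    by rewrite -(take_takel p (ltnW hj)) Ht1 take_takel // ltnW.
  apply: Hm1; lia.
Qed.

Lemma fsim2_refl (A : structure s) (x : fplay A) : is_fplay g A x -> fsim2 x x.
Proof.
case: x => p a [[Hne _] /= Hl]; split => //; exists (size p).
split; first by case: p Hne Hl => [H|//]; case: H.
split => //; split => //; split => //.
by split => j /= /andP [h1 h2]; have -> : j = size p by [lia]; rewrite take_size.
Qed.


Lemma sig_eq (A : structure s) (C D : Gcarrier g A) : sval C = sval D -> C = D.
Proof. by case: C D => c pc [d pd] /= E; subst d; f_equal; apply: proof_irrelevance. Qed.

Lemma gcls_eq (A : structure s) (x y : fplay A) : fsim2 x y -> gcls g x = gcls g y.
Proof.
move=> H; apply: sig_eq => /=.
apply: functional_extensionality => z; apply: propositional_extensionality.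
rewrite /fclass !fsimE; split => [[Hz Hs]|[Hz Hs]]; split => //.
- exact: fsim2_trans (fsim2_sym H) Hs.
- exact: fsim2_trans H Hs.
Qed.

Lemma class_sim (A : structure s) (x y : fplay A) :
  is_fplay g A y -> fclass g x = fclass g y -> fsim2 x y.
Proof.
move=> Hy E.
have : fclass g y y by split => //; rewrite fsimE; apply: fsim2_refl.
by rewrite -E => -[_]; rewrite fsimE.
Qed.

Lemma rep_spec (A : structure s) (C : G g A) :
  Gdom C -> is_fplay g A (rep C) /\ sval C = fclass g (rep C).
Proof.
move=> H; rewrite /rep; case: excluded_middle_informative => [H'|//].
by case: constructive_indefinite_description => x [Hx Hc].
Qed.

Lemma Gdom_gcls (A : structure s) (x : fplay A) : is_fplay g A x -> Gdom (gcls g x).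
Proof. by move=> Hx; exists x. Qed.

Lemma rep_gcls (A : structure s) (x : fplay A) :
  is_fplay g A x -> is_fplay g A (rep (gcls g x)) /\ fsim2 (rep (gcls g x)) x.
Proof.
move=> Hx; have [H1 H2] := rep_spec (Gdom_gcls Hx); split => //.
by apply: class_sim => //; rewrite -H2.
Qed.

Lemma gcls_rep (A : structure s) (C : G g A) : Gdom C -> C = gcls g (rep C).
Proof. by move=> H; apply: sig_eq; rewrite (proj2 (rep_spec H)). Qed.

Lemma counit_gcls (A : structure s) (x : fplay A) : is_fplay g A x -> counit (gcls g x) = x.2.
Proof. by move=> Hx; rewrite /counit; have [_ [-> _]] := rep_gcls Hx. Qed.

Lemma Forall_take (T : Type) (P : T -> Prop) (l : seq T) j : List.Forall P l -> List.Forall P (take j l).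
Proof.
elim: l j => [|x l IH] [|j] //= H; try constructor.
all: inversion H; subst; auto.
Qed.

Lemma Forall_cat (T : Type) (P : T -> Prop) (l1 l2 : seq T) :
  List.Forall P l1 -> List.Forall P l2 -> List.Forall P (l1 ++ l2).
Proof. elim: l1 => [|x l IH] //= H1 H2; inversion H1; subst; constructor; auto. Qed.

Lemma Forall_last (T : Type) (P : T -> Prop) (x : T) (l : seq T) : List.Forall P (x :: l) -> P (last x l).
Proof. elim: l x => [|y l IH] x H /=; inversion H; subst => //; exact: IH. Qed.

Lemma play_take (A : structure s) (p : play_seq A) j : is_play g A p -> 0 < j -> is_play g A (take j p).
Proof.
move=> [Hne Hf] Hj; split; last exact: Forall_take.
by case: p Hne {Hf} => [H|x p _]; [case: H|case: j Hj].
Qed.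

Lemma guarded_last (A : structure s) (p : play_seq A) : is_play g A p -> guarded g A (lambda p).
Proof. by case: p => [[H _]|x p [_ H]]; [case: H|exact: Forall_last H]. Qed.

Lemma play_cat (A : structure s) (q : play_seq A) S :
  is_play g A q -> guarded g A S -> is_play g A (q ++ [:: S]).
Proof.
move=> [Hne Hf] HS; split; first by case: q Hne {Hf}.
apply: Forall_cat => //; by constructor.
Qed.

Lemma lambda_cat (A : structure s) (q : play_seq A) S : lambda (q ++ [:: S]) = S.
Proof. by rewrite /lambda last_cat. Qed.

Lemma ext_valid (A : structure s) (q : play_seq A) S b :
  is_play g A q -> guarded g A S -> S b -> is_fplay g A (q ++ [:: S], b).
Proof. by move=> Hq HS Hb; split; [exact: play_cat|rewrite /= lambda_cat]. Qed.

Lemma ext_eq (A : structure s) (q : play_seq A) S b :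
  is_play g A q -> guarded g A S -> S b -> lambda q b ->
  gcls g (q, b) = gcls g (q ++ [:: S], b).
Proof.
move=> Hq HS Hb Hl.
apply: gcls_eq; split => //=; exists (size q).
have q0 : 0 < size q by case: Hq; case: (q) => // H; case: H.
rewrite size_cat /= take_size take_size_cat //.
do 4 (split; first by lia || done).
split => j /andP [h1 h2].
- by have -> : j = size q by [lia]; rewrite take_size.
- case: (ltnP (size q) j) => h3.
  + have -> : j = size (q ++ [:: S]) by rewrite size_cat /=; lia.
    by rewrite take_size lambda_cat.
  + by have -> : j = size q by [lia]; rewrite take_size_cat.
Qed.

Lemma Grel_mk (A : structure s) (q : play_seq A) r (t : 'I_(arity r) -> A) :
  is_play g A q -> (forall i, lambda q (t i)) -> Defs.rel A r t ->
  @Grel g s A r (fun i => gcls g (q, t i)).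
Proof. by move=> Hq Hl Hr; exists q, t. Qed.

Lemma lambda_take (A : structure s) (p : play_seq A) j :
  j < size p -> lambda (take j.+1 p) = nth (fun _ => False) p j.
Proof. by move=> Hj; rewrite /lambda -nth_last size_takel // nth_take. Qed.

Section VP.
Variables (A B : structure s) (f : G g A -> B).

Lemma size_Vplay p : size (Vplay f p) = size p.
Proof. by rewrite /Vplay size_map size_iota. Qed.

Lemma Vset_take p j k : j <= k -> Vset f (take k p) j = Vset f p j.
Proof. by move=> H; rewrite /Vset take_takel. Qed.

Lemma take_Vplay p j : j <= size p -> take j (Vplay f p) = Vplay f (take j p).
Proof.
move=> H; rewrite /Vplay -map_take take_iota size_takel //.
have -> : minn j (size p) = j by lia.
apply/eq_in_map => i; rewrite mem_iota => /andP [h1 h2].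
by rewrite Vset_take //; lia.
Qed.

Lemma lambda_take_Vplay p j : j < size p -> lambda (take j.+1 (Vplay f p)) = Vset f p j.+1.
Proof.
move=> H; rewrite lambda_take ?size_Vplay // /Vplay (nth_map 0) ?size_iota //.
by rewrite nth_iota.
Qed.

Lemma lambda_Vplay p : 0 < size p -> lambda (Vplay f p) = Vset f p (size p).
Proof.
case E: (size p) => [|n] // _.
by rewrite -{1}(take_size (Vplay f p)) size_Vplay E lambda_take_Vplay // E.
Qed.

Lemma Forall_iota (P : (B -> Prop) -> Prop) (F : nat -> B -> Prop) m n :
  (forall j, m <= j < m + n -> P (F j)) -> List.Forall P (map F (iota m n)).
Proof.
elim: n m => [|n IH] m H /=; constructor.
- apply: H; lia.
- apply: IH => j Hj; apply: H; lia.
Qed.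

End VP.

End Basics.

Lemma mem_In (T : eqType) (x : T) s : x \in s -> List.In x s.
Proof. by elim: s => //= y s IH; rewrite in_cons => /orP [/eqP ->|/IH]; auto. Qed.

Lemma In_map_iff (T1 T2 : Type) (f : T1 -> T2) l y :
  List.In y (map f l) <-> exists x, f x = y /\ List.In x l.
Proof.
elim: l => [|x l IH] /=; first by split => // -[z [_ []]].
split.
- case=> [<-|H]; first by exists x; auto.
  have [z [E Hz]] := proj1 IH H; exists z; auto.
- case=> z [E [Hx|Hz]]; first by left; rewrite Hx.
  right; apply: (proj2 IH); exists z; auto.
Qed.

Lemma In_map (T1 T2 : Type) (f : T1 -> T2) l x : List.In x l -> List.In (f x) (map f l).
Proof. by move=> H; apply/In_map_iff; exists x. Qed.

Lemma In_tuple_list s (A : structure s) n (t : 'I_n -> A) x :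
  List.In x (map t (enum 'I_n)) -> Defs.in_tuple t x.
Proof. by move=> /In_map_iff [i [<- _]]; exists i. Qed.

Lemma tuple_list_In s (A : structure s) n (t : 'I_n -> A) i :
  List.In (t i) (map t (enum 'I_n)).
Proof. by apply: In_map; apply: mem_In; rewrite mem_enum. Qed.

Lemma image_guarded g s (A B : structure s) (f : G g A -> B) (q : play_seq A) :
  is_hom (G g A) B f -> is_play g A q ->
  guarded g B (fun y => exists b, lambda q b /\ y = f (gcls g (q, b))).
Proof.
move=> Hf Hq; have HU := guarded_last Hq.
case: g f Hf Hq HU => f [Hfd Hfr] Hq HU.
- case: HU => [[r [t [Hrt Hsub]]]|[a [Ha Hsub]]].
  + pose S := fun x => Defs.in_tuple t x.
    have HS : guarded AtomGuard A S by left; exists r, t.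
    left; exists r, (fun i => f (gcls AtomGuard (q ++ [:: S], t i))); split.
    * apply: (Hfr r (fun i => gcls AtomGuard (q ++ [:: S], t i))).
      apply: Grel_mk => //; [exact: play_cat| move=> i; rewrite lambda_cat; by exists i].
    * move=> y [b [Hb ->]]; have [i Hi] := Hsub b Hb; exists i.
      have HSb : S b by exists i.
      by rewrite /= Hi (ext_eq Hq HS HSb Hb).
  + pose S := fun x : A => x = a.
    have HS : guarded AtomGuard A S by right; exists a.
    right; exists (f (gcls AtomGuard (q ++ [:: S], a))); split.
    * by apply: Hfd; apply: Gdom_gcls; exact: ext_valid.
    * move=> y [b [Hb ->]]; have E := Hsub b Hb; subst b.
      by rewrite (ext_eq Hq HS (erefl a) Hb).
- case: HU => Y [HYd [HYs HYp]].
  pose S := fun x => List.In x Y.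
  have HS : guarded LooseGuard A S by exists Y.
  pose q' := q ++ [:: S].
  have Hq' : is_play LooseGuard A q' := play_cat Hq HS.
  pose F := fun y => f (gcls LooseGuard (q', y)).
  exists (map F Y); split; [|split].
  + move=> y /In_map_iff [x [<- Hx]]; apply: Hfd; apply: Gdom_gcls; exact: ext_valid.
  + move=> y [b [Hb ->]]; have Hb' := HYs b Hb.
    rewrite (ext_eq Hq HS Hb' Hb); exact: In_map.
  + move=> y1 y2 /In_map_iff [x1 [<- H1]] /In_map_iff [x2 [<- H2]].
    case: (HYp x1 x2 H1 H2) => [->|[r [t [Hrt [Ht1 [Ht2 Hall]]]]]]; first by left.
    right; exists r, (fun i => F (t i)); split; [|split; [|split]].
    * apply: (Hfr r (fun i => gcls LooseGuard (q', t i))).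
      apply: Grel_mk => // i; rewrite /q' lambda_cat; exact: Hall.
    * by case: Ht1 => i <-; exists i.
    * by case: Ht2 => i <-; exists i.
    * move=> i; exact: In_map.
- case: HU => Y [HYd [HYs HYp]].
  pose S := fun x => List.In x Y.
  have HS : guarded CliqueGuard A S by exists Y.
  pose q' := q ++ [:: S].
  have Hq' : is_play CliqueGuard A q' := play_cat Hq HS.
  pose F := fun y => f (gcls CliqueGuard (q', y)).
  exists (map F Y); split; [|split].
  + move=> y /In_map_iff [x [<- Hx]]; apply: Hfd; apply: Gdom_gcls; exact: ext_valid.
  + move=> y [b [Hb ->]]; have Hb' := HYs b Hb.
    rewrite (ext_eq Hq HS Hb' Hb); exact: In_map.
  + move=> y1 y2 /In_map_iff [x1 [<- H1]] /In_map_iff [x2 [<- H2]].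
    case: (HYp x1 x2 H1 H2) => [->|[r [t [Hrt [Ht1 Ht2]]]]]; first by left.
    right.
    pose S2 := fun x => Defs.in_tuple t x.
    have HS2 : guarded CliqueGuard A S2.
      exists (map t (enum 'I_(arity r))); split; [|split].
      * move=> y /In_map_iff [i [<- _]]; exact: (@rel_dom s A r t i Hrt).
      * move=> x [i <-]; exact: tuple_list_In.
      * move=> y y' Hy Hy'; right; exists r, t; split => //; split; exact: In_tuple_list.
    pose q'' := q' ++ [:: S2].
    exists r, (fun i => f (gcls CliqueGuard (q'', t i))); split; [|split].
    * apply: (Hfr r (fun i => gcls CliqueGuard (q'', t i))).
      apply: Grel_mk => //; [exact: play_cat|move=> i; rewrite lambda_cat; by exists i].
    * case: Ht1 => i Hi; exists i; rewrite /F Hi.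
      have HS2x : S2 x1 by exists i.
      have Hl : lambda q' x1 by rewrite /q' lambda_cat.
      by rewrite (ext_eq Hq' HS2 HS2x Hl).
    * case: Ht2 => i Hi; exists i; rewrite /F Hi.
      have HS2x : S2 x2 by exists i.
      have Hl : lambda q' x2 by rewrite /q' lambda_cat.
      by rewrite (ext_eq Hq' HS2 HS2x Hl).
Qed.

Section Main.
Variables (g : guard_kind) (s : vocab).

Lemma Vplay_play (A B : structure s) (f : G g A -> B) p :
  is_hom (G g A) B f -> is_play g A p -> is_play g B (Vplay f p).
Proof.
move=> Hf Hp; split.
- have : 0 < size (Vplay f p) by rewrite size_Vplay; case: Hp; case: (p) => // H; case: H.
  by case: (Vplay f p).
- rewrite /Vplay; apply: Forall_iota => j Hj.
  apply: (image_guarded (q := take j p) Hf); apply: play_take => //; lia.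
Qed.

Lemma Vplay_valid (A B : structure s) (f : G g A -> B) p a :
  is_hom (G g A) B f -> is_fplay g A (p, a) -> is_fplay g B (Vplay f p, f (gcls g (p, a))).
Proof.
move=> Hf [Hp Ha]; split; first exact: Vplay_play.
have p0 : 0 < size p by case: Hp; case: (p) => // H; case: H.
rewrite /= lambda_Vplay //; exists a; by rewrite take_size.
Qed.

Lemma sim_take (A : structure s) (p : play_seq A) a k j :
  (forall j, k <= j <= size p -> lambda (take j p) a) -> 0 < j -> k <= j <= size p ->
  gcls g (p, a) = gcls g (take j p, a).
Proof.
move=> Hl j0 /andP [h1 h2]; apply: gcls_eq; split => //; exists j => /=.
rewrite size_takel // take_takel //.
do 4 (split; first by lia || done).
split => j2 /andP [h3 h4].
- apply: Hl; lia.
- have -> : j2 = j by lia.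
  by rewrite take_takel //; apply: Hl; lia.
Qed.

Lemma Vplay_sim (A B : structure s) (f : G g A -> B) p q a :
  fsim2 (p, a) (q, a) ->
  fsim2 (Vplay f p, f (gcls g (p, a))) (Vplay f q, f (gcls g (p, a))).
Proof.
move=> H; have E := gcls_eq g H.
case: H => _ [k [k0 [kp [kq [Ht [Hl1 Hl2]]]]]]; split => //; exists k => /=.
rewrite !size_Vplay !take_Vplay // Ht.
do 4 (split; first by done).
split => j /andP [h1 h2]; (case: j h1 h2 => [|j] h1 h2; first by lia).
- rewrite lambda_take_Vplay ?size_Vplay //; exists a; split; first by apply: Hl1 => /=; lia.
  by rewrite (sim_take Hl1 (j := j.+1)) //; apply/andP.
- rewrite lambda_take_Vplay ?size_Vplay //; exists a; split; first by apply: Hl2 => /=; lia.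
  by rewrite E (sim_take Hl2 (j := j.+1)) //; apply/andP.
Qed.

Lemma coext_gcls (A B : structure s) (f : G g A -> B) p a :
  is_fplay g A (p, a) -> coext f (gcls g (p, a)) = gcls g (Vplay f p, f (gcls g (p, a))).
Proof.
move=> Hx; rewrite /coext; have [Hv Hs] := rep_gcls Hx.
move: Hv Hs; case: (rep (gcls g (p, a))) => p' a' Hv Hs.
have Ea : a' = a by case: Hs.
subst a'; have E := gcls_eq g Hs; rewrite /= -E.
apply: gcls_eq; exact: Vplay_sim.
Qed.

Lemma Gdom_ex (A : structure s) (C : G g A) :
  Gdom C -> exists p a, is_fplay g A (p, a) /\ C = gcls g (p, a).
Proof.
move=> H; have [Hv _] := rep_spec H; rewrite (gcls_rep H).
by move: Hv; case: (rep C) => p a Hv; exists p, a.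
Qed.

Lemma guarded_dom (A : structure s) (X : A -> Prop) a : guarded g A X -> X a -> dom A a.
Proof.
case: g => /=.
- case=> [[r [t [Hrt Hsub]]]|[b [Hb Hsub]]] Ha.
  + by have [i <-] := Hsub a Ha; exact: (@rel_dom s A r t i Hrt).
  + by rewrite (Hsub a Ha).
- by case=> Y [HYd [HYs _]] Ha; apply: HYd; apply: HYs.
- by case=> Y [HYd [HYs _]] Ha; apply: HYd; apply: HYs.
Qed.

Lemma Grel_inv (A : structure s) r (t : 'I_(arity r) -> G g A) :
  Grel t -> exists p a, is_play g A p /\ (forall i, lambda p (a i)) /\ Defs.rel A r a /\
    forall i, t i = gcls g (p, a i).
Proof.
move=> [p [a [Hp [Hl [Hr Ht]]]]]; exists p, a; do 3 (split => //).
by move=> i; apply: sig_eq; rewrite Ht.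
Qed.

Lemma counit_hom (A : structure s) : is_hom (G g A) A (@counit g s A).
Proof.
split.
- move=> C /Gdom_ex [p [a [Hx ->]]]; rewrite counit_gcls //=.
  case: Hx => Hp Ha; exact: guarded_dom (guarded_last Hp) Ha.
- move=> r t /Grel_inv [p [a [Hp [Hl [Hr Ht]]]]].
  have -> : (fun i => counit (t i)) = a.
    by apply: functional_extensionality => i; rewrite Ht counit_gcls //; split; [exact: Hp|exact: Hl].
  exact: Hr.
Qed.

Lemma coext_hom (A B : structure s) (f : G g A -> B) :
  is_hom (G g A) B f -> is_hom (G g A) (G g B) (coext f).
Proof.
move=> Hf; split.
- move=> C /Gdom_ex [p [a [Hx ->]]]; rewrite coext_gcls //.
  apply: Gdom_gcls; exact: Vplay_valid.
- move=> r t Hrt; have [p [a [Hp [Hl [Hr Ht]]]]] := Grel_inv Hrt.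
  exists (Vplay f p), (fun i => f (t i)); split; first exact: Vplay_play.
  have p0 : 0 < size p by case: Hp; case: (p) => // H; case: H.
  split; first by move=> i; rewrite lambda_Vplay //; exists (a i); rewrite take_size Ht.
  split; first exact: (proj2 Hf r t Hrt).
  by move=> i; rewrite Ht coext_gcls //; split; [exact: Hp|exact: Hl].
Qed.

Lemma nth_Vplay (A B : structure s) (f : G g A -> B) p i :
  i < size p -> nth (fun _ => False) (Vplay f p) i = Vset f p i.+1.
Proof. by move=> H; rewrite /Vplay (nth_map 0) ?size_iota // nth_iota. Qed.

Lemma Vplay_counit (A : structure s) p : is_play g A p -> Vplay (@counit g s A) p = p.
Proof.
move=> Hp; apply: (@eq_from_nth _ (fun _ => False)); first by rewrite size_Vplay.
move=> i; rewrite size_Vplay => Hi; rewrite nth_Vplay // -lambda_take //.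
apply: functional_extensionality => y; apply: propositional_extensionality; split.
- move=> [b [Hb ->]]; rewrite counit_gcls //; split => //; exact: play_take.
- move=> Hy; exists y; split => //; rewrite counit_gcls //; split => //; exact: play_take.
Qed.

End Main.

Theorem theorem3p5 (g : guard_kind) (s : vocab) :
  (* the counit and coextensions are morphisms of sigma-structures *)
  (forall A : structure s, is_hom (G g A) A (@counit g s A)) /\
  (forall (A B : structure s) (f : G g A -> B),
      is_hom (G g A) B f -> is_hom (G g A) (G g B) (coext f)) /\
  (* epsilon_A^* = id *)
  (forall (A : structure s) (x : G g A),
      dom (G g A) x -> coext (@counit g s A) x = x) /\
  (* epsilon o f^* = f *)
  (forall (A B : structure s) (f : G g A -> B),
      is_hom (G g A) B f ->
      forall x : G g A, dom (G g A) x -> counit (coext f x) = f x) /\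
  (* (g o f^* )^* = g^* o f^* *)
  (forall (A B C : structure s) (f : G g A -> B) (h : G g B -> C),
      is_hom (G g A) B f -> is_hom (G g B) C h ->
      forall x : G g A, dom (G g A) x ->
        coext (fun y => h (coext f y)) x = coext h (coext f x)).
Proof.
split; first exact: counit_hom.
split; first exact: coext_hom.
split.
  move=> A x /Gdom_ex [p [a [Hx ->]]].
  rewrite coext_gcls // counit_gcls //= Vplay_counit //; by case: Hx.
split.
  move=> A B f Hf x /Gdom_ex [p [a [Hx ->]]].
  by rewrite coext_gcls // counit_gcls //; exact: Vplay_valid.
move=> A B C f h Hf Hh x /Gdom_ex [p [a [Hx ->]]].
have HH : is_hom (G g A) C (fun y => h (coext f y)).
  have [Hc1 Hc2] := coext_hom Hf; case: Hh => Hh1 Hh2.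
  split; first by move=> y Hy; apply: Hh1; apply: Hc1.
  by move=> r t Hrt; apply: (Hh2 r (fun i => coext f (t i))); apply: Hc2.
rewrite (coext_gcls _ Hx) (coext_gcls _ Hx) (coext_gcls _ (Vplay_valid Hf Hx)).
congr (gcls g (_, _)).
have p0 : is_play g A p by case: Hx.
apply: (@eq_from_nth _ (fun _ => False)); first by rewrite !size_Vplay.
move=> i; rewrite size_Vplay => Hi; rewrite !nth_Vplay ?size_Vplay //.
rewrite /Vset lambda_take_Vplay // take_Vplay //.
apply: functional_extensionality => y; apply: propositional_extensionality.
have Hv : forall b, lambda (take i.+1 p) b -> is_fplay g A (take i.+1 p, b).
  by move=> b Hb; split => //; apply: play_take.
split.
- move=> [b [Hb ->]]; exists (f (gcls g (take i.+1 p, b))); split; first by exists b.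
  by rewrite coext_gcls //; exact: Hv.
- move=> [z [[b [Hb ->]] ->]]; exists b; split => //.
  by rewrite coext_gcls //; exact: Hv.
Qed.
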